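(* Let $\lambda_0,\lambda_1\in\mathbb{R}$, $a<b$, and $f:[a,b]\to\mathbb{C}$ twice continuously differentiable. Then $$|D_{\lambda_0}f(a)|\le 4\frac{e^{(|\lambda_0|+|\lambda_1|)(b-a)}}{b-a}\max\{|f(a)|,|f(b)|\}+2\max_{t\in[a,b]}|D_{\lambda_1}D_{\lambda_0}f(t)|\,(b-a)\,e^{|\lambda_1|(b-a)}.$$
   Context: For $\lambda\in\mathbb{C}$, $D_\lambda f=f'-\lambda f$ (one-sided derivatives at endpoints). *)

(* Defs.v *)
From Stdlib Require Import Reals.
Open Scope R_scope.

(* f' is the derivative of f on [a,b], taken within [a,b]
   (so one-sided derivatives at the endpoints). *)
Definition deriv_within (a b : R) (f f' : R -> R) : Prop :=
  forall x, a <= x <= b ->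
    limit1_in (fun y => (f y - f x) / (y - x))
              (fun y => a <= y <= b /\ y <> x) (f' x) x.

Definition cont_within (a b : R) (g : R -> R) : Prop :=
  forall x, a <= x <= b -> limit1_in g (fun y => a <= y <= b) (g x) x.

Definition C2_within (a b : R) (f f1 f2 : R -> R) : Prop :=
  deriv_within a b f f1 /\ deriv_within a b f1 f2 /\ cont_within a b f2.

(* D_lam f = f' - lam f, given f and its derivative f1 *)
Definition Dl (lam : R) (f f1 : R -> R) : R -> R := fun t => f1 t - lam * f t.

(* modulus of the complex number x + i y *)
Definition cmod (x y : R) : R := sqrt (x ^ 2 + y ^ 2).

(* Main.v *)
Require Import Defs.
From Stdlib Require Import Reals Lra.
From Coquelicot Require Import Coquelicot.
Open Scope R_scope.

Lemma exp_mono x y : x <= y -> exp x <= exp y.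
Proof. intros [H|H]. left; apply exp_increasing; auto. subst; lra. Qed.

Definition cl (a b x : R) := Rmax a (Rmin b x).

Lemma cl_id a b x : a <= x <= b -> cl a b x = x.
Proof. intros. unfold cl, Rmax, Rmin; repeat destruct Rle_dec; lra. Qed.

Lemma cl_in a b x : a <= b -> a <= cl a b x <= b.
Proof. intros. unfold cl, Rmax, Rmin; repeat destruct Rle_dec; lra. Qed.

Lemma cl_lip a b x y : a <= b -> Rabs (cl a b x - cl a b y) <= Rabs (x - y).
Proof. intros. unfold cl, Rmax, Rmin; repeat destruct Rle_dec; split_Rabs; lra. Qed.

Lemma limit1_in_ext f g D l x :
  (forall y, D y -> f y = g y) -> limit1_in f D l x -> limit1_in g D l x.
Proof.
  intros He H eps Heps. destruct (H eps Heps) as [alp [Ha Hb]].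
  exists alp; split; auto. intros y [Dy Hy]. rewrite <- He by auto. apply Hb; auto.
Qed.

Lemma deriv_lin a b f f' g g' al be :
  deriv_within a b f f' -> deriv_within a b g g' ->
  deriv_within a b (fun t => al * f t + be * g t) (fun t => al * f' t + be * g' t).
Proof.
  intros Hf Hg x Hx.
  apply limit1_in_ext with (fun y => (fun _ => al) y * ((f y - f x)/(y-x)) + (fun _ => be) y * ((g y - g x)/(y-x))).
  { intros y _. unfold Rdiv. ring. }
  apply limit_plus; apply limit_mul.
  - apply (limit_free (fun _ => al) _ x x).
  - apply Hf; auto.
  - apply (limit_free (fun _ => be) _ x x).
  - apply Hg; auto.
Qed.

Lemma cont_of_deriv a b f f' x :
  deriv_within a b f f' -> a <= x <= b -> limit1_in f (fun y => a <= y <= b) (f x) x.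
Proof.
  intros Hd Hx eps Heps.
  destruct (Hd x Hx 1 ltac:(lra)) as [alp [Ha Hb]].
  set (K := Rabs (f' x) + 1).
  assert (HK : 0 < K) by (unfold K; pose proof (Rabs_pos (f' x)); lra).
  exists (Rmin alp (eps / K)). split.
  { apply Rmin_glb_lt; auto. apply Rdiv_lt_0_compat; auto. }
  intros y [Dy Hy]. simpl in *. unfold R_dist in *.
  destruct (Req_dec y x) as [->|Hne].
  { rewrite Rminus_diag, Rabs_R0; lra. }
  assert (Hy1 : Rabs (y - x) < alp) by (eapply Rlt_le_trans; [exact Hy| apply Rmin_l]).
  assert (Hy2 : Rabs (y - x) < eps / K) by (eapply Rlt_le_trans; [exact Hy| apply Rmin_r]).
  specialize (Hb y (conj (conj Dy Hne) Hy1)). simpl in Hb. unfold R_dist in Hb.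
  assert (Hq : Rabs ((f y - f x) / (y - x)) < K).
  { unfold K. pose proof (Rabs_triang_inv ((f y - f x) / (y - x)) (f' x)). lra. }
  assert (E : f y - f x = (f y - f x) / (y - x) * (y - x)) by (field; lra).
  rewrite E, Rabs_mult.
  assert (Hy3 : Rabs (y - x) * K < eps).
  { apply Rmult_lt_reg_r with (/K). apply Rinv_0_lt_compat; auto.
    rewrite Rmult_assoc, Rinv_r by lra. rewrite Rmult_1_r. exact Hy2. }
  pose proof (Rabs_pos (y - x)).
  pose proof (Rabs_pos ((f y - f x) / (y - x))).
  assert (0 < Rabs (y - x)) by (apply Rabs_pos_lt; lra).
  nra.
Qed.

Lemma clamp_cont a b f f' x :
  a < b -> deriv_within a b f f' -> continuity_pt (fun t => f (cl a b t)) x.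
Proof.
  intros Hab Hd eps Heps.
  destruct (cont_of_deriv a b f f' (cl a b x) Hd (cl_in a b x ltac:(lra)) eps Heps) as [alp [Ha Hb]].
  exists alp; split; auto. intros y [_ Hy]. simpl in *. unfold R_dist in *.
  apply Hb. split. apply cl_in; lra. simpl. unfold R_dist.
  eapply Rle_lt_trans. apply cl_lip; lra. auto.
Qed.

Lemma clamp_deriv a b f f' c :
  deriv_within a b f f' -> a < c < b -> derivable_pt_lim (fun t => f (cl a b t)) c (f' c).
Proof.
  intros Hd Hc eps Heps.
  destruct (Hd c ltac:(lra) eps Heps) as [alp [Ha Hb]].
  assert (Hp : 0 < Rmin alp (Rmin (c - a) (b - c))).
  { repeat apply Rmin_glb_lt; lra. }
  exists (mkposreal _ Hp). intros h Hh Hlt. simpl in Hlt.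
  assert (H1 := Rmin_l alp (Rmin (c - a) (b - c))).
  assert (H2 := Rmin_r alp (Rmin (c - a) (b - c))).
  assert (H3 := Rmin_l (c - a) (b - c)).
  assert (H4 := Rmin_r (c - a) (b - c)).
  assert (Hin : a <= c + h <= b) by (split_Rabs; lra).
  rewrite (cl_id a b (c + h)) by lra. rewrite (cl_id a b c) by lra.
  specialize (Hb (c + h)). simpl in Hb. unfold R_dist in Hb.
  replace (c + h - c) with h in Hb by ring.
  apply Hb. split. split. lra. intro E. apply Hh; lra. lra.
Qed.

Lemma mvt_exp a b l f f' s : a < b -> deriv_within a b f f' -> a <= s <= b ->
 exists c, a <= c <= s /\
   exp (-l*(s-a)) * f s - f a = exp (-l*(c-a)) * (f' c - l * f c) * (s - a).
Proof.
  intros Hab Hd Hs.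
  destruct (MVT_gen (fun t => exp (-l*(t-a)) * f (cl a b t)) a s
     (fun t => exp (-l*(t-a)) * (f' t - l * f t))) as [c [Hc E]].
  - rewrite Rmin_left, Rmax_right by lra. intros x Hx.
    apply is_derive_Reals.
    assert (HE : derivable_pt_lim (fun t => exp (-l*(t-a))) x (- l * exp (-l*(x-a)))).
    { apply is_derive_Reals. auto_derive; auto. unfold Rminus. ring. }
    assert (HF := clamp_deriv a b f f' x Hd ltac:(lra)).
    assert (H := derivable_pt_lim_mult _ _ _ _ _ HE HF).
    unfold mult_fct in H. rewrite (cl_id a b x) in H by lra.
    replace (exp (- l * (x - a)) * (f' x - l * f x))
      with (- l * exp (- l * (x - a)) * f x + exp (- l * (x - a)) * f' x) by ring.
    exact H.
  - intros x _. apply continuity_pt_mult.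
    + apply derivable_continuous_pt. 
      apply (derivable_pt_comp (fun t => -l*(t-a)) exp). 
      * apply derivable_pt_mult. apply derivable_pt_const.
        apply derivable_pt_minus. apply derivable_pt_id. apply derivable_pt_const.
      * apply derivable_pt_exp.
    + apply (clamp_cont a b f f' x Hab Hd).
  - rewrite Rmin_left, Rmax_right in Hc by lra.
    exists c. split; auto.
    rewrite (cl_id a b s), (cl_id a b a) in E by lra.
    rewrite <- E. replace (-l*(a-a)) with 0 by ring. rewrite exp_0. ring.
Qed.

Lemma exp_bd l t L : 0 <= t <= L -> exp (l * t) <= exp (Rabs l * L).
Proof.
  intros Ht. apply exp_mono. eapply Rle_trans. apply Rle_abs.
  rewrite Rabs_mult, (Rabs_pos_eq t) by lra.
  apply Rmult_le_compat_l. apply Rabs_pos. lra.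
Qed.

Lemma real_case a b l0 l1 p p1 p2 K M :
 a < b -> deriv_within a b p p1 -> deriv_within a b p1 p2 ->
 Rabs (p a) <= K -> Rabs (p b) <= K ->
 (forall t, a <= t <= b -> Rabs ((p2 t - l0 * p1 t) - l1 * (p1 t - l0 * p t)) <= M) ->
 Rabs (p1 a - l0 * p a) <=
   2 * exp ((Rabs l0 + Rabs l1) * (b - a)) / (b - a) * K
   + M * (b - a) * exp (Rabs l1 * (b - a)).
Proof.
  intros Hab Hp Hp1 Ka Kb HM.
  destruct (mvt_exp a b l0 p p1 b Hab Hp ltac:(lra)) as [xi [Hxi E1]].
  assert (Hq := deriv_lin a b p1 p2 p p1 1 (-l0) Hp1 Hp).
  destruct (mvt_exp a b l1 _ _ xi Hab Hq ltac:(lra)) as [eta [Heta E2]].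
  cbv beta in E2.
  set (L := b - a) in *.
  set (qx := p1 xi - l0 * p xi).
  set (qa := p1 a - l0 * p a).
  assert (E2' : exp (- l1 * (xi - a)) * qx - qa =
     exp (- l1 * (eta - a)) * ((p2 eta - l0 * p1 eta) - l1 * (p1 eta - l0 * p eta)) * (xi - a)).
  { match type of E2 with ?X = ?Y => transitivity X; [unfold qx, qa; ring | rewrite E2; ring] end. }
  clear E2.
  set (A := exp (l0 * (xi - a))).
  assert (HA : A * exp (- l0 * (xi - a)) = 1).
  { unfold A. rewrite <- exp_plus. replace (l0 * (xi - a) + - l0 * (xi - a)) with 0 by ring.
    apply exp_0. }
  assert (E1' : A * exp (- l0 * L) * p b - A * p a = qx * L).
  { transitivity (A * (exp (- l0 * L) * p b - p a)). ring. rewrite E1.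
    unfold qx. transitivity ((A * exp (- l0 * (xi - a))) * (p1 xi - l0 * p xi) * L). ring.
    rewrite HA. ring. }
  assert (HB : A * exp (- l0 * L) <= exp (Rabs l0 * L)).
  { unfold A. rewrite <- exp_plus.
    replace (l0 * (xi - a) + - l0 * L) with ((-l0) * (b - xi)) by (unfold L; ring).
    rewrite <- (Rabs_Ropp l0). apply exp_bd. unfold L; lra. }
  assert (HA2 : A <= exp (Rabs l0 * L)) by (apply exp_bd; unfold L; lra).
  assert (HBpos : 0 < A * exp (- l0 * L)) by (apply Rmult_lt_0_compat; apply exp_pos).
  assert (HApos : 0 < A) by apply exp_pos.
  assert (HL : 0 < L) by (unfold L; lra).
  assert (Hqx : Rabs qx * L <= 2 * exp (Rabs l0 * L) * K).
  { replace (Rabs qx * L) with (Rabs (qx * L)) by (rewrite Rabs_mult, (Rabs_pos_eq L); lra).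
    rewrite <- E1'. unfold Rminus. eapply Rle_trans. apply Rabs_triang. rewrite Rabs_Ropp.
    rewrite !Rabs_mult, (Rabs_pos_eq (exp (- l0 * L))), (Rabs_pos_eq A) by (try apply Rlt_le, exp_pos; lra).
    pose proof (Rabs_pos (p b)). pose proof (Rabs_pos (p a)).
    nra. }
  set (C := exp (Rabs l1 * L)).
  assert (HC1 : exp (- l1 * (xi - a)) <= C).
  { unfold C. rewrite <- (Rabs_Ropp l1). apply exp_bd. unfold L; lra. }
  assert (HC2 : exp (- l1 * (eta - a)) <= C).
  { unfold C. rewrite <- (Rabs_Ropp l1). apply exp_bd. unfold L; lra. }
  assert (HMe := HM eta ltac:(lra)).
  set (r := (p2 eta - l0 * p1 eta) - l1 * (p1 eta - l0 * p eta)) in *.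
  assert (Hqa : Rabs qa <= C * Rabs qx + C * M * L).
  { replace qa with (exp (- l1 * (xi - a)) * qx - exp (- l1 * (eta - a)) * r * (xi - a)) by lra.
    unfold Rminus. eapply Rle_trans. apply Rabs_triang. rewrite Rabs_Ropp.
    rewrite !Rabs_mult, !Rabs_pos_eq by (try apply Rlt_le, exp_pos; lra).
    pose proof (exp_pos (- l1 * (xi - a))). pose proof (exp_pos (- l1 * (eta - a))).
    pose proof (Rabs_pos qx). pose proof (Rabs_pos r).
    assert (exp (- l1 * (xi - a)) * Rabs qx <= C * Rabs qx) by nra.
    assert (exp (- l1 * (eta - a)) * Rabs r <= C * M) by nra.
    assert (0 <= xi - a <= L) by (unfold L; lra).
    assert (0 <= C * M) by nra.
    assert (exp (- l1 * (eta - a)) * Rabs r * (xi - a) <= C * M * (xi - a)) by nra.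
    assert (C * M * (xi - a) <= C * M * L) by nra.
    change (xi + - a) with (xi - a). change (eta + - a) with (eta - a).
    rewrite (Rabs_pos_eq (exp (- l1 * (eta - a)))) by (apply Rlt_le, exp_pos).
    rewrite (Rabs_pos_eq (xi - a)) by lra.
    lra. }
  assert (Hsum : exp ((Rabs l0 + Rabs l1) * L) = exp (Rabs l0 * L) * C).
  { unfold C. rewrite <- exp_plus. f_equal. ring. }
  rewrite Hsum.
  assert (HCpos : 0 < C) by apply exp_pos.
  assert (C * Rabs qx <= 2 * (exp (Rabs l0 * L) * C) / L * K).
  { apply Rmult_le_reg_r with L; auto.
    replace (2 * (exp (Rabs l0 * L) * C) / L * K * L) with (C * (2 * exp (Rabs l0 * L) * K))
      by (field; lra).
    nra. }
  lra.
Qed.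

Lemma cmod_pos x y : 0 <= cmod x y.
Proof. apply sqrt_pos. Qed.

Lemma CS al be x y : Rabs (al * x + be * y) <= cmod al be * cmod x y.
Proof.
  unfold cmod. rewrite <- sqrt_mult by nra.
  rewrite <- sqrt_Rsqr_abs. apply sqrt_le_1. apply Rle_0_sqr. apply Rmult_le_pos; nra.
  unfold Rsqr. pose proof (Rle_0_sqr (al * y - be * x)). unfold Rsqr in *. nra.
Qed.

Lemma cmod_sq x y : cmod x y * cmod x y = x * x + y * y.
Proof. unfold cmod. rewrite sqrt_sqrt by nra. ring. Qed.

Theorem mainTheorem19 (l0 l1 a b : R) (u u1 u2 v v1 v2 : R -> R) (M : R) :
  a < b ->
  C2_within a b u u1 u2 ->
  C2_within a b v v1 v2 ->
  (forall t, a <= t <= b ->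
     cmod (Dl l1 (Dl l0 u u1) (Dl l0 u1 u2) t)
          (Dl l1 (Dl l0 v v1) (Dl l0 v1 v2) t) <= M) ->
  cmod (Dl l0 u u1 a) (Dl l0 v v1 a) <=
    4 * (exp ((Rabs l0 + Rabs l1) * (b - a)) / (b - a))
      * Rmax (cmod (u a) (v a)) (cmod (u b) (v b))
    + 2 * M * (b - a) * exp (Rabs l1 * (b - a)).
Proof.
  intros Hab [Hu [Hu1 _]] [Hv [Hv1 _]] HM.
  set (gu := Dl l0 u u1 a). set (gv := Dl l0 v v1 a).
  set (N := cmod gu gv).
  set (Km := Rmax (cmod (u a) (v a)) (cmod (u b) (v b))).
  assert (HM0 : 0 <= M) by (eapply Rle_trans; [apply cmod_pos | apply (HM a); lra]).
  assert (HK0 : 0 <= Km) by (eapply Rle_trans; [apply cmod_pos | apply Rmax_l]).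
  assert (HN0 : 0 <= N) by apply cmod_pos.
  set (E := exp ((Rabs l0 + Rabs l1) * (b - a))).
  set (C := exp (Rabs l1 * (b - a))).
  assert (HE : 0 < E) by apply exp_pos. assert (HC : 0 < C) by apply exp_pos.
  assert (HL : 0 < b - a) by lra.
  assert (HEL : 0 < E / (b - a)) by (apply Rdiv_lt_0_compat; auto).
  assert (Hreal := real_case a b l0 l1
     (fun t => gu * u t + gv * v t) (fun t => gu * u1 t + gv * v1 t)
     (fun t => gu * u2 t + gv * v2 t) (N * Km) (N * M) Hab
     (deriv_lin a b u u1 v v1 gu gv Hu Hv) (deriv_lin a b u1 u2 v1 v2 gu gv Hu1 Hv1)).
  cbv beta in Hreal.
  assert (H1 : Rabs (gu * u a + gv * v a) <= N * Km).
  { eapply Rle_trans. apply CS. apply Rmult_le_compat_l; auto. apply Rmax_l. }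
  assert (H2 : Rabs (gu * u b + gv * v b) <= N * Km).
  { eapply Rle_trans. apply CS. apply Rmult_le_compat_l; auto. apply Rmax_r. }
  specialize (Hreal H1 H2).
  assert (H3 : forall t, a <= t <= b ->
    Rabs (gu * u2 t + gv * v2 t - l0 * (gu * u1 t + gv * v1 t) -
          l1 * (gu * u1 t + gv * v1 t - l0 * (gu * u t + gv * v t))) <= N * M).
  { intros t Ht.
    replace (gu * u2 t + gv * v2 t - l0 * (gu * u1 t + gv * v1 t) -
          l1 * (gu * u1 t + gv * v1 t - l0 * (gu * u t + gv * v t)))
      with (gu * Dl l1 (Dl l0 u u1) (Dl l0 u1 u2) t + gv * Dl l1 (Dl l0 v v1) (Dl l0 v1 v2) t)
      by (unfold Dl; ring).
    eapply Rle_trans. apply CS. apply Rmult_le_compat_l; auto. }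
  specialize (Hreal H3).
  replace (gu * u1 a + gv * v1 a - l0 * (gu * u a + gv * v a)) with (N * N) in Hreal
    by (unfold N; rewrite cmod_sq; unfold gu, gv, Dl; ring).
  rewrite Rabs_pos_eq in Hreal by nra.
  fold E C in Hreal. fold N Km E C.
  assert (HR : 0 <= 2 * E / (b - a) * Km + M * (b - a) * C).
  { assert (2 * E / (b - a) * Km = 2 * (E / (b - a)) * Km) by (unfold Rdiv; ring).
    assert (0 <= E / (b - a) * Km) by (apply Rmult_le_pos; lra).
    assert (0 <= M * (b - a)) by (apply Rmult_le_pos; lra).
    assert (0 <= M * (b - a) * C) by (apply Rmult_le_pos; lra). lra. }
  assert (HN : N <= 2 * E / (b - a) * Km + M * (b - a) * C).
  { destruct HN0 as [HNp|HNz].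
    - apply Rmult_le_reg_l with N; auto.
      replace (2 * E / (b - a) * (N * Km) + N * M * (b - a) * C)
        with (N * (2 * E / (b - a) * Km + M * (b - a) * C)) in Hreal by ring. lra.
    - rewrite <- HNz. auto. }
  assert (2 * E / (b - a) * Km = 2 * (E / (b - a)) * Km) by (unfold Rdiv; ring).
  assert (0 <= E / (b - a) * Km) by (apply Rmult_le_pos; lra).
  assert (0 <= M * (b - a) * C) by (apply Rmult_le_pos; [apply Rmult_le_pos|]; lra).
  assert (4 * (E / (b - a)) * Km = 2 * (2 * (E / (b - a)) * Km)) by ring.
  assert (2 * M * (b - a) * C = 2 * (M * (b - a) * C)) by ring.
  lra.
Qed.
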